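(* Let $m\geq 2$, $\mathcal M=\{1,\dots,m\}$, $X_{\mathcal M}=(X_1,\dots,X_m)$ a discrete memoryless multiple source with finite alphabets, and $\mathcal A\subseteq\mathcal M$ with $|\mathcal A|\geq 2$. For every $R_{\mathcal M}\in\mathscr R(\mathcal A)$ and all $\mathcal B_1,\mathcal B_2\subseteq\mathcal M$ with $\mathcal B_1\cup\mathcal B_2\in\mathscr B(\mathcal A)$: if $\mathrm{SW}(R_{\mathcal M},\mathcal B_1)=0$ and $\mathrm{SW}(R_{\mathcal M},\mathcal B_2)=0$, then $\mathrm{SW}(R_{\mathcal M},\mathcal B_1\cup\mathcal B_2)=0$ and $\mathrm{SW}(R_{\mathcal M},\mathcal B_1\cap\mathcal B_2)=0$.
   Context: Define $\mathscr B(\mathcal A):=\{\mathcal B\subsetneq\mathcal M:\ \mathcal B\neq\emptyset,\ \mathcal B\not\supseteq\mathcal A\}$. Let $h(\mathcal B):=H(X_{\mathcal B}\mid X_{\mathcal B^c})$ for $\mathcal B\subseteq\mathcal M$ (complements in $\mathcal M$; in particular $h(\emptyset)=0$). For $R_{\mathcal M}=(R_1,\dots,R_m)\in\mathbb R^m$ and $\mathcal B\subseteq\mathcal M$ let $\mathrm{SW}(R_{\mathcal M},\mathcal B):=\sum_{j\in\mathcal B}R_j-h(\mathcal B)$, and $\mathscr R(\mathcal A):=\{R_{\mathcal M}\in\mathbb R^m:\ \mathrm{SW}(R_{\mathcal M},\mathcal B)\geq 0\ \forall\,\mathcal B\in\mathscr B(\mathcal A)\}$. *)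

(* Defs.v *)
From HB Require Import structures.
From mathcomp Require Import all_boot all_order all_algebra.
From mathcomp Require Import reals exp.
Set Implicit Arguments. Unset Strict Implicit. Unset Printing Implicit Defensive.
Import Order.TTheory GRing.Theory Num.Theory.
Local Open Scope ring_scope.

(* Terminals M = {1..m} are modelled as 'I_m; source X_i takes values in the
   finite alphabet T i.  A (single-letter) joint pmf of X_M is a function on
   the product alphabet. *)
Definition outcome (m : nat) (T : 'I_m -> finType) := {dffun forall i, T i}.

Definition is_pmf (R : realType) (m : nat) (T : 'I_m -> finType)
  (P : outcome T -> R) : Prop :=
  (forall x, 0 <= P x) /\ \sum_x P x = 1.

Definition marg (R : realType) (m : nat) (T : 'I_m -> finType)
  (P : outcome T -> R) (S : {set 'I_m}) (x : outcome T) : R :=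
  \sum_(y : outcome T | [forall i in S, y i == x i]) P y.

Definition cond_entropy (R : realType) (m : nat) (T : 'I_m -> finType)
  (P : outcome T -> R) (B C : {set 'I_m}) : R :=
  - \sum_x P x * ln (marg P (B :|: C) x / marg P C x).

Definition h (R : realType) (m : nat) (T : 'I_m -> finType)
  (P : outcome T -> R) (B : {set 'I_m}) : R :=
  cond_entropy P B (~: B).

Definition SW (R : realType) (m : nat) (T : 'I_m -> finType)
  (P : outcome T -> R) (Rt : 'I_m -> R) (B : {set 'I_m}) : R :=
  \sum_(j in B) Rt j - h P B.

Definition scrB (m : nat) (A : {set 'I_m}) : pred {set 'I_m} :=
  [pred B : {set 'I_m} | (B \proper [set: 'I_m]) && (B != set0) && ~~ (A \subset B)].

Definition scrR (R : realType) (m : nat) (T : 'I_m -> finType)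
  (P : outcome T -> R) (A : {set 'I_m}) (Rt : 'I_m -> R) : Prop :=
  forall B, B \in scrB A -> 0 <= SW P Rt B.

(* Main.v *)
Require Import Defs.
From HB Require Import structures.
From mathcomp Require Import all_boot all_order all_algebra.
From mathcomp Require Import reals exp.
From mathcomp Require Import ring lra.
Import Order.TTheory GRing.Theory Num.Theory.
Local Open Scope ring_scope.

Set Implicit Arguments.
Unset Strict Implicit.
Section Aux.
Variables (R : realType) (m : nat) (T : 'I_m -> finType) (P : outcome T -> R).
Hypothesis HP : is_pmf P.

Definition agree (S : {set 'I_m}) (x y : outcome T) := [forall i in S, x i == y i].

Lemma agreeP (S : {set 'I_m}) (x y : outcome T) : reflect (forall i, i \in S -> x i = y i) (agree S x y).
Proof.
apply: (iffP forallP) => H i.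
  by move=> iS; move: (H i); rewrite iS => /eqP.
by apply/implyP => /H ->.
Qed.

Lemma agreeE (S : {set 'I_m}) (x y : outcome T) :
  agree S x y -> forall i, i \in S -> x i = y i.
Proof. by move/agreeP. Qed.

Lemma agree_sym (S : {set 'I_m}) (x y : outcome T) : agree S x y = agree S y x.
Proof.
by apply/agreeP/agreeP => H i iS; rewrite H.
Qed.

Lemma marg_ge0 (S : {set 'I_m}) x : 0 <= marg P S x.
Proof. by apply: sumr_ge0 => y _; case: HP. Qed.

Lemma marg_geP (S : {set 'I_m}) x : P x <= marg P S x.
Proof.
rewrite /marg (bigD1 x) /=; last by apply/forallP => i; apply/implyP.
rewrite lerDl; apply: sumr_ge0 => y _; by case: HP.
Qed.

Lemma marg_compat (S : {set 'I_m}) (x y : outcome T) : agree S x y -> marg P S x = marg P S y.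
Proof.
move=> /agreeP Hxy; apply: eq_bigl => z.
by apply/forallP/forallP => H i; apply/implyP => iS; move: (H i);
  rewrite iS /= => /eqP ->; rewrite ?Hxy // -Hxy.
Qed.

Definition L (S : {set 'I_m}) := \sum_x P x * ln (marg P S x).

Lemma h_L (B : {set 'I_m}) : h P B = L (~: B) - L setT.
Proof.
rewrite /h /cond_entropy setUCr /L -sumrB -sumrN; apply: eq_bigr => x _.
have [->|px] := eqVneq (P x) 0; first by rewrite !mul0r subrr oppr0.
have p0 : 0 < P x by rewrite lt0r px; case: HP => H _; apply: H.
have a : 0 < marg P setT x by apply: lt_le_trans p0 (marg_geP _ _).
have b : 0 < marg P (~: B) x by apply: lt_le_trans p0 (marg_geP _ _).
by rewrite ln_div ?posrE //; ring.
Qed.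

Lemma inner_bound (C1 C2 : {set 'I_m}) y z :
  \sum_x (if agree C1 y x && agree C2 z x then
            P x / (marg P (C1 :&: C2) x * marg P (C1 :|: C2) x) else 0)
  <= (if agree (C1 :&: C2) y z then (marg P (C1 :&: C2) y)^-1 else 0).
Proof.
have Hp : forall x, 0 <= P x by case: HP.
case Hyz: (agree (C1 :&: C2) y z).
  case: (pickP (fun x => agree C1 y x && agree C2 z x)) => [x0 /andP[h1 h2]|none].
    set c := (marg P (C1 :&: C2) y * marg P (C1 :|: C2) x0)^-1.
    have c0 : 0 <= c by rewrite /c invr_ge0 mulr_ge0 // marg_ge0.
    apply: (@le_trans _ _ (\sum_x ((if agree (C1 :|: C2) x x0 then P x else 0) * c))).
      apply: ler_sum => x _.
      case: ifP => [/andP[k1 k2]|_]; last first.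
        by case: ifP => _; rewrite ?mul0r // mulr_ge0.
      have hU : agree (C1 :|: C2) x x0.
        apply/agreeP => i; rewrite inE => /orP[] iC.
          by rewrite -(agreeE k1 iC) (agreeE h1 iC).
        by rewrite -(agreeE k2 iC) (agreeE h2 iC).
      rewrite hU (marg_compat hU).
      rewrite (@marg_compat _ x y) //; apply/agreeP => i; rewrite inE => /andP[iC _].
      by rewrite (agreeE k1 iC).
    rewrite -big_distrl -big_mkcond /= /c.
    have -> : \sum_(x | agree (C1 :|: C2) x x0) P x = marg P (C1 :|: C2) x0 by [].
    have [->|nz] := eqVneq (marg P (C1 :|: C2) x0) 0; first by rewrite mul0r invr_ge0 marg_ge0.
    rewrite invfM mulrA mulrC mulrA mulVf // mul1r //.
  rewrite big1 ?invr_ge0 ?marg_ge0 // => x _; by rewrite none.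
rewrite big1 // => x _; case: ifP => // /andP[k1 k2].
move/negP: Hyz; case; apply/agreeP => i; rewrite inE => /andP[i1 i2].
by rewrite (agreeE k1 i1) -(agreeE k2 i2).
Qed.

Lemma margE (S : {set 'I_m}) x :
  marg P S x = \sum_y (if agree S y x then P y else 0).
Proof. by rewrite /marg big_mkcond. Qed.

Lemma T_le1 (C1 C2 : {set 'I_m}) :
  \sum_x P x * (marg P C1 x * marg P C2 x /
                (marg P (C1 :&: C2) x * marg P (C1 :|: C2) x)) <= 1.
Proof.
have Hp : forall x, 0 <= P x by case: HP.
set mI := marg P (C1 :&: C2); set mU := marg P (C1 :|: C2).
have E : forall x, P x * (marg P C1 x * marg P C2 x / (mI x * mU x)) =
   \sum_y \sum_z P y * P z * (if agree C1 y x && agree C2 z x then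
            P x / (mI x * mU x) else 0).
  move=> x; rewrite (margE C1) (margE C2).
  have -> : forall a b c d : R, a * (b * c / d) = b * (c * (a / d)).
    by move=> a b c d; ring.
  rewrite big_distrl /=; apply: eq_bigr => y _.
  rewrite big_distrl /= big_distrr /=; apply: eq_bigr => z _.
  by case: (agree C1 y x); case: (agree C2 z x); rewrite /= ?mul0r ?mulr0 ?mul0r //; ring.
rewrite (eq_bigr _ (fun x _ => E x)) exchange_big /=.
apply: (@le_trans _ _ (\sum_y \sum_z P y * P z *
    (if agree (C1 :&: C2) y z then (mI y)^-1 else 0))).
  apply: ler_sum => y _; rewrite exchange_big /=; apply: ler_sum => z _.
  rewrite -big_distrr /=; apply: ler_wpM2l; first by rewrite mulr_ge0.
  exact: inner_bound.
case: HP => _ <-; apply: ler_sum => y _.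
apply: (@le_trans _ _ (P y * (mI y * (mI y)^-1))).
  rewrite /mI (margE (C1 :&: C2) y) big_distrl /= big_distrr /= le_eqVlt; apply/orP; left.
  apply/eqP; apply: eq_bigr => z _; rewrite agree_sym.
  by case: ifP; rewrite ?mulr0 ?mul0r // => _; ring.
have [->|nz] := eqVneq (mI y) 0; first by rewrite mul0r mulr0.
by rewrite mulfV // mulr1.
Qed.
Lemma gibbs (C1 C2 : {set 'I_m}) :
  L C1 + L C2 <= L (C1 :&: C2) + L (C1 :|: C2).
Proof.
have Hp : forall x, 0 <= P x by case: HP.
rewrite -subr_ge0.
set mI := marg P (C1 :&: C2); set mU := marg P (C1 :|: C2).
set m1 := marg P C1; set m2 := marg P C2.
have -> : L (C1 :&: C2) + L (C1 :|: C2) - (L C1 + L C2) =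
   \sum_x P x * (ln (mI x) + ln (mU x) - ln (m1 x) - ln (m2 x)).
  rewrite /L opprD addrA -big_split /= -!sumrB; apply: eq_bigr => x _; ring.
apply: (@le_trans _ _ (\sum_x (P x - P x * (m1 x * m2 x / (mI x * mU x))))).
  rewrite sumrB; case: HP => _ ->; rewrite subr_ge0; exact: T_le1.
apply: ler_sum => x _.
have [->|px] := eqVneq (P x) 0; first by rewrite !mul0r subrr.
have p0 : 0 < P x by rewrite lt0r px; case: HP => H _; apply: H.
have pos : forall S, 0 < marg P S x by move=> S; apply: lt_le_trans p0 (marg_geP _ _).
have hq : 0 < m1 x * m2 x / (mI x * mU x) by apply: divr_gt0; apply: mulr_gt0; apply: pos.
have lq : ln (m1 x * m2 x / (mI x * mU x)) = ln (m1 x) + ln (m2 x) - ln (mI x) - ln (mU x).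
  have a1 := pos C1; have a2 := pos C2; have aI := pos (C1 :&: C2); have aU := pos (C1 :|: C2).
  rewrite ln_div ?posrE; last 2 first.
    by apply: mulr_gt0.
    by apply: mulr_gt0.
  by rewrite !lnM ?posrE //; ring.
set q := m1 x * m2 x / (mI x * mU x) in hq lq *.
have H : ln q <= q - 1.
  have := @le_ln1Dx R (q - 1); rewrite (_ : 1 + (q - 1) = q); last by ring.
  apply; lra.
rewrite lq in H.
nra.
Qed.
End Aux.

Theorem proposition2 (R : realType) (m : nat) (T : 'I_m -> finType)
  (P : outcome T -> R) (A : {set 'I_m}) (Rt : 'I_m -> R) (B1 B2 : {set 'I_m}) :
  (2 <= m)%N -> is_pmf P -> (2 <= #|A|)%N ->
  scrR P A Rt ->
  B1 :|: B2 \in scrB A ->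
  SW P Rt B1 = 0 -> SW P Rt B2 = 0 ->
  SW P Rt (B1 :|: B2) = 0 /\ SW P Rt (B1 :&: B2) = 0.
Proof.
move=> _ HP _ HR HU S1 S2.
have sumR : \sum_(j in B1 :|: B2) Rt j + \sum_(j in B1 :&: B2) Rt j =
            \sum_(j in B1) Rt j + \sum_(j in B2) Rt j.
  rewrite !(big_mkcond (fun j => j \in _)) -!big_split /=; apply: eq_bigr => j _.
  rewrite !inE; case: (j \in B1); case: (j \in B2) => /=; ring.
have hs : h P B1 + h P B2 <= h P (B1 :|: B2) + h P (B1 :&: B2).
  rewrite !(h_L HP) setCU setCI.
  have := gibbs HP (~: B1) (~: B2); lra.
have hU : 0 <= SW P Rt (B1 :|: B2) by apply: HR.
have hI : 0 <= SW P Rt (B1 :&: B2).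
  have [->|nz] := eqVneq (B1 :&: B2) set0.
    by rewrite /SW big_set0 (h_L HP) setC0 !subrr.
  apply: HR; move: HU; rewrite !inE => /andP[/andP[pr _] nA].
  rewrite nz andbT; apply/andP; split.
    apply: sub_proper_trans pr; exact: subset_trans (subsetIl _ _) (subsetUl _ _).
  apply: contra nA => sA; apply: subset_trans sA (subset_trans (subsetIl _ _) (subsetUl _ _)).
move: S1 S2 hU hI; rewrite /SW => S1 S2 hU hI.
split; lra.
Qed.
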